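(* Let $\mathbf{W}=\langle W;\to,\neg,{}^{+},{}^{-},1\rangle$ be a quasi-Wajsberg* algebra. Define relations $\mu,\tau$ on $W$ by: $\langle x,y\rangle\in\mu$ iff $x\le y$ and $y\le x$; $\langle x,y\rangle\in\tau$ iff $x=y$ or $x,y\in R(W)$. Then $\mu$ and $\tau$ are congruences on $\mathbf{W}$ (with respect to $\to,\neg,{}^{+},{}^{-}$).
   Context: A quasi-Wajsberg* algebra is an algebra $\langle W;\to,\neg,{}^{+},{}^{-},1\rangle$ of type $\langle2,1,1,1,0\rangle$ such that for all $x,y,z\in W$: (QW*1) $x\to y=\neg y\to\neg x$; (QW*2) $(x\to 1)\to((y\to 1)\to z)=(y\to 1)\to((x\to 1)\to z)$; (QW*3) $(1\to x)\to 1=1$; (QW*4) $(z\to z)\to(x\to y)=x\to y$; (QW*5) $(1\to 1)\to x^{+}=((1\to 1)\to x)^{+}=(x\to 1)\to 1$ and $(1\to 1)\to x^{-}=((1\to 1)\to x)^{-}=(x\to\neg 1)\to\neg 1$; (QW*6) $x\to y=(y^{+}\to x^{-})\to(x^{+}\to y^{-})$; (QW*7) $\neg(x\to y)=y\to x$; (QW*8) $\neg\neg x=x$; (QW*9) $(x\to(\neg x\to y))^{+}=x^{+}\to(\neg x^{+}\to y^{+})$; (QW*10) $x\vee y=y\vee x$; (QW*11) $x\vee(y\vee z)=(x\vee y)\vee z$; (QW*12) $x\to(y\vee z)=(x\to y)\vee(x\to z)$; where $x\vee y:=((x^{+}\to y^{+})^{+}\to(\neg x)^{-})\to((y^{-}\to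 x^{-})^{-}\to x^{-})$. Conventions: ${}^+,{}^-$ bind tighter than $\neg$, which binds tighter than $\to$. Put $0:=1\to 1$, $x\le y$ iff $x\vee y=0\to y$, and $R(W):=\{x\in W: 0\to x=x\}$. *)

(* Defs.v *)
From Stdlib Require Import Relations.

Record QWStar := {
  W :> Type;
  imp : W -> W -> W;
  neg : W -> W;
  plus : W -> W;
  minus : W -> W;
  one : W
}.

Section Ops.
Variable A : QWStar.
Local Notation "x ~> y" := (imp A x y) (at level 55, right associativity).
Local Notation "¬ x" := (neg A x) (at level 35).
Local Notation "x ⁺" := (plus A x) (at level 30).
Local Notation "x ⁻" := (minus A x) (at level 30).
Local Notation "1" := (one A).

Definition qjoin (x y : A) : A :=
  (((x⁺ ~> y⁺)⁺) ~> ((¬ x)⁻)) ~> ((((y⁻ ~> x⁻)⁻) ~> (x⁻))).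

Definition qzero : A := 1 ~> 1.

Definition qle (x y : A) : Prop := qjoin x y = qzero ~> y.

Definition inR (x : A) : Prop := qzero ~> x = x.

Definition is_QWStar : Prop :=
  (forall x y : A, x ~> y = (¬ y) ~> (¬ x)) /\
  (forall x y z : A, (x ~> 1) ~> ((y ~> 1) ~> z) = (y ~> 1) ~> ((x ~> 1) ~> z)) /\
  (forall x : A, (1 ~> x) ~> 1 = 1) /\
  (forall x y z : A, (z ~> z) ~> (x ~> y) = x ~> y) /\
  (forall x : A, (1 ~> 1) ~> x⁺ = ((1 ~> 1) ~> x)⁺ /\
                 ((1 ~> 1) ~> x)⁺ = (x ~> 1) ~> 1) /\
  (forall x : A, (1 ~> 1) ~> x⁻ = ((1 ~> 1) ~> x)⁻ /\
                 ((1 ~> 1) ~> x)⁻ = (x ~> (¬ 1)) ~> (¬ 1)) /\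
  (forall x y : A, x ~> y = (y⁺ ~> x⁻) ~> (x⁺ ~> y⁻)) /\
  (forall x y : A, ¬ (x ~> y) = y ~> x) /\
  (forall x : A, ¬ (¬ x) = x) /\
  (forall x y : A, ((x ~> ((¬ x) ~> y))⁺) = x⁺ ~> ((¬ (x⁺)) ~> y⁺)) /\
  (forall x y : A, qjoin x y = qjoin y x) /\
  (forall x y z : A, qjoin x (qjoin y z) = qjoin (qjoin x y) z) /\
  (forall x y z : A, x ~> (qjoin y z) = qjoin (x ~> y) (x ~> z)).

(* Congruence w.r.t. ->, ¬, +, - (the constant 1 imposes no condition). *)
Definition is_congruence (r : A -> A -> Prop) : Prop :=
  equivalence A r /\
  (forall x1 y1 x2 y2, r x1 y1 -> r x2 y2 -> r (x1 ~> x2) (y1 ~> y2)) /\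
  (forall x y, r x y -> r (¬ x) (¬ y)) /\
  (forall x y, r x y -> r (x⁺) (y⁺)) /\
  (forall x y, r x y -> r (x⁻) (y⁻)).

Definition mu (x y : A) : Prop := qle x y /\ qle y x.
Definition tau (x y : A) : Prop := x = y \/ (inR x /\ inR y).
End Ops.

(* Main.v *)
Require Import Defs.
From Stdlib Require Import Relations.

Lemma idem_gen (A : QWStar) (HA : is_QWStar A) :
  forall a b : A, imp A (imp A (plus A (imp A (plus A a) (plus A a))) (minus A (neg A a))) (imp A (minus A (imp A (minus A a) (minus A a))) (minus A a)) = imp A (imp A (one A) (one A)) a.
Proof.
  destruct HA as [H1 [H2 [H3 [H4 [H5 [H5' [H6 [H7 [H8 [H9 [H10 [H11 H12]]]]]]]]]]]].
  pose proof (fun x => proj1 (H5 x)) as H5a.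
  pose proof (fun x => proj2 (H5 x)) as H5b.
  pose proof (fun x => proj1 (H5' x)) as H5c.
  pose proof (fun x => proj2 (H5' x)) as H5d.
  clear H5 H5'.
  assert (Gidem : forall a b : A, (imp A (imp A (plus A (imp A (plus A a) (plus A a))) (minus A (neg A a))) (imp A (minus A (imp A (minus A a) (minus A a))) (minus A a))) = (imp A (imp A (one A) (one A)) a)).
  {
  assert (E0 : (imp A (one A) (one A)) = (imp A (one A) (one A))).
  { intros; reflexivity. }
  assert (E1 : forall v0 v1, (imp A v0 v1) = (imp A (neg A v1) (neg A v0))).
  { intros; first [reflexivity | apply H1 | symmetry; apply H1]. }
  assert (E3 : forall v0, (imp A (imp A (one A) v0) (one A)) = (one A)).
  { intros; first [reflexivity | apply H3 | symmetry; apply H3]. }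
  assert (E4 : forall v0 v1 v2, (imp A (imp A v0 v0) (imp A v1 v2)) = (imp A v1 v2)).
  { intros; first [reflexivity | apply H4 | symmetry; apply H4]. }
  assert (E5 : forall v0, (imp A (imp A (one A) (one A)) (plus A v0)) = (plus A (imp A (imp A (one A) (one A)) v0))).
  { intros; first [reflexivity | apply H5a | symmetry; apply H5a]. }
  assert (E6 : forall v0, (plus A (imp A (imp A (one A) (one A)) v0)) = (imp A (imp A v0 (one A)) (one A))).
  { intros; first [reflexivity | apply H5b | symmetry; apply H5b]. }
  assert (E7 : forall v0, (imp A (imp A (one A) (one A)) (minus A v0)) = (minus A (imp A (imp A (one A) (one A)) v0))).
  { intros; first [reflexivity | apply H5c | symmetry; apply H5c]. }
  assert (E8 : forall v0, (minus A (imp A (imp A (one A) (one A)) v0)) = (imp A (imp A v0 (neg A (one A))) (neg A (one A)))).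
  { intros; first [reflexivity | apply H5d | symmetry; apply H5d]. }
  assert (E9 : forall v0 v1, (imp A v0 v1) = (imp A (imp A (plus A v1) (minus A v0)) (imp A (plus A v0) (minus A v1)))).
  { intros; first [reflexivity | apply H6 | symmetry; apply H6]. }
  assert (E10 : forall v0 v1, (neg A (imp A v0 v1)) = (imp A v1 v0)).
  { intros; first [reflexivity | apply H7 | symmetry; apply H7]. }
  assert (E11 : forall v0, (neg A (neg A v0)) = v0).
  { intros; first [reflexivity | apply H8 | symmetry; apply H8]. }
  assert (E13 : (one A) = (imp A (imp A (one A) (one A)) (one A))).
  { intros; pose proof (E3 (one A)); pose proof (E0 ); congruence. }
  assert (E14 : (imp A (one A) (one A)) = (neg A (imp A (one A) (one A)))).
  { intros; pose proof (E10 (one A) (one A)); pose proof (E0 ); congruence. }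
  assert (E17 : (imp A (one A) (imp A (one A) (one A))) = (neg A (one A))).
  { intros; pose proof (E10 (imp A (one A) (one A)) (one A)); pose proof (E13 ); congruence. }
  assert (E18 : (imp A (one A) (one A)) = (neg A (imp A (one A) (one A)))).
  { intros; pose proof (E14 ); pose proof (E0 ); congruence. }
  assert (E20 : (one A) = (imp A (neg A (one A)) (one A))).
  { intros; pose proof (E3 (imp A (one A) (one A))); pose proof (E17 ); congruence. }
  assert (E31 : forall v0 v1, (imp A v0 (neg A v1)) = (imp A v1 (neg A v0))).
  { intros; pose proof (E1 v0 (neg A v1)); pose proof (E11 v1); congruence. }
  assert (E36 : forall v0, (imp A v0 (imp A (one A) (one A))) = (imp A (imp A (one A) (one A)) (neg A v0))).
  { intros; pose proof (E1 v0 (imp A (one A) (one A))); pose proof (E18 ); congruence. }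
  assert (E37 : forall v0, (imp A (imp A (one A) (one A)) v0) = (imp A (neg A v0) (imp A (one A) (one A)))).
  { intros; pose proof (E1 (imp A (one A) (one A)) v0); pose proof (E18 ); congruence. }
  assert (E44 : forall v0, (imp A (plus A v0) (imp A (one A) (one A))) = (neg A (plus A (imp A (imp A (one A) (one A)) v0)))).
  { intros; pose proof (E10 (imp A (one A) (one A)) (plus A v0)); pose proof (E5 v0); congruence. }
  assert (E120 : (plus A (imp A (imp A (one A) (one A)) (imp A (one A) (one A)))) = (imp A (one A) (one A))).
  { intros; pose proof (E6 (imp A (one A) (one A))); pose proof (E13 ); congruence. }
  assert (E121 : forall v0, (imp A (one A) (imp A v0 (one A))) = (neg A (plus A (imp A (imp A (one A) (one A)) v0)))).
  { intros; pose proof (E10 (imp A v0 (one A)) (one A)); pose proof (E6 v0); congruence. }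
  assert (E122 : (plus A (imp A (imp A (one A) (one A)) (neg A (one A)))) = (imp A (one A) (one A))).
  { intros; pose proof (E6 (neg A (one A))); pose proof (E20 ); congruence. }
  assert (E129 : (plus A (imp A (imp A (one A) (one A)) (imp A (one A) (one A)))) = (imp A (one A) (one A))).
  { intros; pose proof (E120 ); pose proof (E0 ); congruence. }
  assert (E131 : (plus A (neg A (one A))) = (imp A (one A) (one A))).
  { intros; pose proof (E122 ); pose proof (E36 (one A)); pose proof (E17 ); pose proof (E0 ); congruence. }
  assert (E132 : (plus A (imp A (imp A (one A) (one A)) (neg A (one A)))) = (imp A (imp A (one A) (one A)) (imp A (one A) (one A)))).
  { intros; pose proof (E5 (neg A (one A))); pose proof (E131 ); congruence. }
  assert (E133 : (imp A (one A) (one A)) = (imp A (imp A (one A) (one A)) (imp A (one A) (one A)))).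
  { intros; pose proof (E132 ); pose proof (E36 (one A)); pose proof (E17 ); pose proof (E131 ); congruence. }
  assert (E135 : (imp A (one A) (one A)) = (plus A (imp A (one A) (one A)))).
  { intros; pose proof (E129 ); pose proof (E133 ); congruence. }
  assert (E212 : forall v0 v1, (imp A v0 v1) = (imp A (imp A (one A) (one A)) (imp A v0 v1))).
  { intros; pose proof (E4 (one A) v0 v1); pose proof (E0 ); congruence. }
  assert (E213 : forall v0, (imp A (one A) (one A)) = (imp A (imp A v0 v0) (imp A (one A) (one A)))).
  { intros; pose proof (E4 v0 (one A) (one A)); pose proof (E0 ); congruence. }
  assert (E294 : forall v0, (imp A (one A) (one A)) = (imp A (imp A v0 v0) (imp A (one A) (one A)))).
  { intros; pose proof (E213 v0); pose proof (E0 ); congruence. }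
  assert (E296 : forall v0, (imp A (imp A (one A) (one A)) (imp A v0 v0)) = (neg A (imp A (one A) (one A)))).
  { intros; pose proof (E10 (imp A v0 v0) (imp A (one A) (one A))); pose proof (E294 v0); congruence. }
  assert (E304 : forall v0, (imp A v0 v0) = (imp A (one A) (one A))).
  { intros; pose proof (E296 v0); pose proof (E212 v0 v0); pose proof (E18 ); congruence. }
  assert (E364 : forall v0, (imp A (one A) (imp A v0 (one A))) = (imp A (plus A v0) (imp A (one A) (one A)))).
  { intros; pose proof (E121 v0); pose proof (E44 v0); congruence. }
  assert (E1481 : forall v0, (minus A (imp A (imp A (one A) (one A)) v0)) = (imp A (one A) (imp A (neg A (one A)) v0))).
  { intros; pose proof (E8 v0); pose proof (E31 (imp A v0 (neg A (one A))) (one A)); pose proof (E10 v0 (neg A (one A))); congruence. }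
  assert (E1486 : forall v0, (minus A (imp A (imp A (one A) (one A)) (neg A v0))) = (imp A (one A) (imp A v0 (one A)))).
  { intros; pose proof (E1481 (neg A v0)); pose proof (E1 v0 (one A)); congruence. }
  assert (E1487 : (minus A (imp A (imp A (one A) (one A)) (imp A (one A) (one A)))) = (imp A (one A) (imp A (imp A (one A) (one A)) (one A)))).
  { intros; pose proof (E1481 (imp A (one A) (one A))); pose proof (E37 (one A)); congruence. }
  assert (E2473 : (minus A (imp A (one A) (one A))) = (imp A (one A) (one A))).
  { intros; pose proof (E1487 ); pose proof (E133 ); pose proof (E13 ); pose proof (E0 ); congruence. }
  assert (E3195 : forall v0, (minus A (imp A v0 (imp A (one A) (one A)))) = (imp A (plus A v0) (imp A (one A) (one A)))).
  { intros; pose proof (E1486 v0); pose proof (E36 v0); pose proof (E364 v0); congruence. }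
  assert (E8021 : forall v0, (imp A (imp A (one A) (one A)) v0) = (imp A (imp A (plus A v0) (minus A (imp A (one A) (one A)))) (imp A (imp A (one A) (one A)) (minus A v0)))).
  { intros; pose proof (E9 (imp A (one A) (one A)) v0); pose proof (E135 ); congruence. }
  assert (E8377 : forall v0, (imp A (imp A (one A) (one A)) v0) = (imp A (minus A (imp A v0 (imp A (one A) (one A)))) (minus A (imp A (imp A (one A) (one A)) v0)))).
  { intros; pose proof (E8021 v0); pose proof (E2473 ); pose proof (E3195 v0); pose proof (E7 v0); congruence. }
  intros a b; pose proof (E304 (plus A a)); pose proof (E135 ); pose proof (E7 (neg A a)); pose proof (E36 a); pose proof (E304 (minus A a)); pose proof (E2473 ); pose proof (E7 a); pose proof (E8377 a); congruence. }
  exact Gidem.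
Qed.

Lemma base_lemmas (A : QWStar) (HA : is_QWStar A) :
  (forall x, qjoin A x x = imp A (imp A (one A) (one A)) x) /\
  (forall x y, imp A x (imp A (imp A (one A) (one A)) y) = imp A x y) /\
  (forall x y, imp A (imp A (imp A (one A) (one A)) x) y = imp A x y).
Proof.
  pose proof (idem_gen A HA) as G.
  destruct HA as [H1 [H2 [H3 [H4 [H5 [H5' [H6 [H7 [H8 [H9 [H10 [H11 H12]]]]]]]]]]]].
  assert (ID : forall x, qjoin A x x = imp A (imp A (one A) (one A)) x).
  { intros x. unfold qjoin. apply (G x x). }
  assert (KC : forall x y, imp A x (imp A (imp A (one A) (one A)) y) = imp A x y).
  { intros x y. pose proof (H12 x y y) as E. rewrite !ID in E. rewrite E.
    apply H4. }
  split; [exact ID|split; [exact KC|]].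
  intros x y.
  assert (N0 : neg A (imp A (one A) (one A)) = imp A (one A) (one A)) by apply H7.
  rewrite (H1 (imp A (imp A (one A) (one A)) x) y).
  rewrite (H7 (imp A (one A) (one A)) x).
  rewrite (H1 x (imp A (one A) (one A))). rewrite N0.
  rewrite KC. symmetry. apply H1.
Qed.

Theorem proposition4p1 (A : QWStar) (HA : is_QWStar A) :
  is_congruence A (mu A) /\ is_congruence A (tau A).
Proof.
  destruct (base_lemmas A HA) as [ID [KC KA]].
  destruct HA as [H1 [H2 [H3 [H4 [H5 [H5' [H6 [H7 [H8 [H9 [H10 [H11 H12]]]]]]]]]]]].
  set (Z := imp A (one A) (one A)) in *.
  assert (RI : forall x y, imp A Z (imp A x y) = imp A x y).
  { intros. apply H4. }
  assert (N0 : neg A Z = Z) by apply H7.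
  assert (RN : forall x, imp A Z (neg A x) = neg A (imp A Z x)).
  { intros x. rewrite H7. rewrite (H1 x Z). rewrite N0. reflexivity. }
  assert (MU : forall x y, mu A x y <-> imp A Z x = imp A Z y).
  { intros x y. unfold mu, qle, qzero. fold Z. split.
    - intros [E1 E2]. rewrite <- E1, <- E2. apply H10.
    - intros E.
      assert (J : qjoin A x y = qjoin A x x).
      { unfold qjoin.
        assert (P1 : imp A (plus A x) (plus A y) = imp A (plus A x) (plus A x)).
        { rewrite <- (KC (plus A x) (plus A y)), <- (KC (plus A x) (plus A x)).
          destruct (H5 x) as [Ex _]. destruct (H5 y) as [Ey _]. fold Z in Ex, Ey.
          rewrite Ex, Ey, E. reflexivity. }
        assert (P2 : imp A (minus A y) (minus A x) = imp A (minus A x) (minus A x)).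
        { rewrite <- (KA (minus A y) (minus A x)), <- (KA (minus A x) (minus A x)).
          destruct (H5' x) as [Ex _]. destruct (H5' y) as [Ey _]. fold Z in Ex, Ey.
          rewrite Ex, Ey, E. reflexivity. }
        rewrite P1, P2. reflexivity. }
      split.
      + rewrite J, ID. fold Z. exact E.
      + rewrite H10, J, ID. reflexivity. }
  split.
  - split; [|split; [|split; [|split]]].
    + split.
      * intros x. apply MU. reflexivity.
      * intros x y z Hxy Hyz. apply MU. apply MU in Hxy. apply MU in Hyz. congruence.
      * intros x y Hxy. apply MU. apply MU in Hxy. congruence.
    + intros x1 y1 x2 y2 E1 E2. apply MU in E1. apply MU in E2. apply MU.
      rewrite <- (KA x1 x2), <- (KC (imp A Z x1) x2), <- (KA y1 y2), <- (KC (imp A Z y1) y2).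
      fold Z. rewrite E1, E2. reflexivity.
    + intros x y E. apply MU in E. apply MU. rewrite !RN, E. reflexivity.
    + intros x y E. apply MU in E. apply MU.
      destruct (H5 x) as [Ex _]. destruct (H5 y) as [Ey _]. fold Z in Ex, Ey.
      rewrite Ex, Ey, E. reflexivity.
    + intros x y E. apply MU in E. apply MU.
      destruct (H5' x) as [Ex _]. destruct (H5' y) as [Ey _]. fold Z in Ex, Ey.
      rewrite Ex, Ey, E. reflexivity.
  - unfold tau, inR, qzero. fold Z.
    split; [|split; [|split; [|split]]].
    + split.
      * intros x. left. reflexivity.
      * intros x y z [E|[Hx Hy]] [E'|[Hy' Hz]]; subst; auto.
      * intros x y [E|[Hx Hy]]; [left; auto | right; auto].
    + intros x1 y1 x2 y2 _ _. right. split; apply RI.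
    + intros x y [E|[Hx Hy]].
      * left. subst. reflexivity.
      * right. rewrite !RN, Hx, Hy. split; reflexivity.
    + intros x y [E|[Hx Hy]].
      * left. subst. reflexivity.
      * right. destruct (H5 x) as [Ex _]. destruct (H5 y) as [Ey _]. fold Z in Ex, Ey.
        rewrite Ex, Ey, Hx, Hy. split; reflexivity.
    + intros x y [E|[Hx Hy]].
      * left. subst. reflexivity.
      * right. destruct (H5' x) as [Ex _]. destruct (H5' y) as [Ey _]. fold Z in Ex, Ey.
        rewrite Ex, Ey, Hx, Hy. split; reflexivity.
Qed.
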